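(* Let $\mathcal P$ be a family of non-zero real polynomials with no constant term, and let $X\subset\mathbb R$, with $|\mathcal P|<\mathfrak{c}$ and $|X|<\mathfrak{c}$. Then there exists a set $Y=\{y_\xi:\xi<\mathfrak{c}\}\subset\mathbb R$ such that $P(y_{\xi_1},y_{\xi_2},\ldots,y_{\xi_n})\notin X$ for every $n\ge1$, every polynomial $P\in\mathcal P$ in $n$ variables and every choice of pairwise distinct ordinals $\xi_1,\dots,\xi_n<\mathfrak{c}$.
   Context: $\mathfrak{c}$ denotes the cardinality of $\mathbb R$, identified with the first ordinal of that cardinality. *)

(* Defs.v *)
From HB Require Import structures.
From mathcomp Require Import all_boot all_order all_algebra.
From mathcomp Require Import reals.
From mathcomp Require Import mpoly.
Set Implicit Arguments. Unset Strict Implicit. Unset Printing Implicit Defensive.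
Import GRing.Theory Num.Theory.
Local Open Scope ring_scope.

Definition lt_continuum (R : realType) (T : Type) (A : T -> Prop) : Prop :=
  ~ (exists f : R -> T, injective f /\ forall r, A (f r)).

Definition anypoly (R : realType) := {n : nat & {mpoly R[n]}}.

(* Main.v *)
Require Import Defs.
From HB Require Import structures.
From mathcomp Require Import all_boot all_order all_algebra.
From mathcomp Require Import reals.
From mathcomp Require Import mpoly.
From mathcomp Require Import boolp classical_sets.
From mathcomp Require polyrcf lebesgue_measure cardinality constructive_ereal.
Import GRing.Theory Num.Theory.
Set Implicit Arguments. Unset Strict Implicit. Unset Printing Implicit Defensive.

Section PF.
Variables (X Y : Type).
Definition pext (c c' : set X * (X -> Y)) :=
  (forall x, c.1 x -> c'.1 x) /\ forall x, c.1 x -> c.2 x = c'.2 x.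

Lemma zorn_pf (y0 : Y) (good : set X -> (X -> Y) -> Prop) D0 f0 :
  good D0 f0 ->
  (forall C : set (set X * (X -> Y)), (exists c, C c) ->
     (forall c, C c -> good c.1 c.2) ->
     (forall c c', C c -> C c' -> pext c c' \/ pext c' c) ->
     forall (D : set X) (f : X -> Y), (forall x, D x <-> exists2 c, C c & c.1 x) ->
       (forall c x, C c -> c.1 x -> f x = c.2 x) -> good D f) ->
  exists D f, good D f /\
    forall D' f', good D' f' -> pext (D, f) (D', f') -> forall x, D' x -> D x.
Proof.
move=> g0 Hch.
pose T := {c : set X * (X -> Y) | good c.1 c.2}.
have t0 : T by exists (D0, f0).
pose Rl (a b : T) := `[< pext (sval a) (sval b) >].
have [|||t tmax] := @ZL_preorder T t0 Rl.
- by move=> [c gc]; apply/asboolP; split.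
- move=> [a ga] [b gb] [c gc] /asboolP [ab1 ab2] /asboolP [bc1 bc2].
  apply/asboolP; split => /=.
  + by move=> x /ab1 /bc1.
  + by move=> x ax; rewrite ab2 // bc2 //; apply: ab1.
- move=> A Atot.
  have [[a Aa]|A0] := pselect (exists a, A a); last first.
    by exists t0 => s As; exfalso; apply: A0; exists s.
  pose C := fun c => exists2 a, A a & sval a = c.
  pose D := fun x => exists2 c, C c & c.1 x.
  pose f := fun x => match pselect (exists c, C c /\ c.1 x) with
              left h => (sval (cid h)).2 x | right _ => y0 end.
  have Ccomp : forall c c', C c -> C c' -> pext c c' \/ pext c' c.
    move=> _ _ [a1 A1 <-] [a2 A2 <-].
    by case: (Atot _ _ A1 A2) => /asboolP; [left|right].
  have fP : forall c x, C c -> c.1 x -> f x = c.2 x.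
    move=> c x Cc cx; rewrite /f; case: pselect => [h|[]]; last by exists c.
    case: (cid h) => c' [Cc' c'x] /=.
    by case: (Ccomp _ _ Cc Cc') => [[_ e]|[_ e]]; rewrite e.
  have gD : good D f.
    apply: (Hch C) => //.
    - by exists (sval a); exists a.
    - by move=> _ [b _ <-]; exact: (svalP b).
  exists (exist (fun c => good c.1 c.2) (D, f) gD) => s As; apply/asboolP; split => /=.
  + by move=> x sx; exists (sval s) => //; exists s.
  + by move=> x sx; rewrite (fP (sval s)) //; exists s.
- exists (sval t).1, (sval t).2; split; first exact: (svalP t).
  move=> D' f' g' e'.
  have := tmax (exist (fun c => good c.1 c.2) (D', f') g'); rewrite /Rl.
  case: t {tmax} e' => [[D f] gt] /= e' H.
  by have /asboolP [h _] := H (asboolT e'); apply: h.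
Qed.
End PF.

Definition injin X Y (f : X -> Y) (A : set X) (B : set Y) :=
  (forall x, A x -> B (f x)) /\ (forall x x', A x -> A x' -> f x = f x' -> x = x').
Definition cle X Y (A : set X) (B : set Y) := exists f : X -> Y, injin f A B.

Lemma compar X Y (x0 : X) (y0 : Y) (A : set X) (B : set Y) : cle A B \/ cle B A.
Proof.
pose good (D : set X) (g : X -> Y) := (forall x, D x -> A x) /\ injin g D B.
have [||D [g [[DA [gB ginj]] gmax]]] := @zorn_pf X Y y0 good set0 (fun _ => y0).
- by split => //; split.
- move=> C [c Cc] Cg Ccomp D f HD Hf; split; [|split].
  + by move=> x /HD [c' Cc' c'x]; have [h _] := Cg _ Cc'; exact: h.
  + by move=> x /HD [c' Cc' c'x]; rewrite (Hf c' x Cc' c'x); have [_ [h _]] := Cg _ Cc'; exact: h.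
  + move=> x x' /HD [c1 C1 x1] /HD [c2 C2 x2]; rewrite (Hf _ _ C1 x1) (Hf _ _ C2 x2).
    case: (Ccomp _ _ C1 C2) => [[s1 e1]|[s2 e2]].
    * rewrite e1 //; have [_ [_ h]] := Cg _ C2; apply: h => //; exact: s1.
    * rewrite e2 //; have [_ [_ h]] := Cg _ C1; apply: h => //; exact: s2.
- have [AD|nAD] := pselect (forall x, A x -> D x).
    left; exists g; split; first by move=> x /AD /gB.
    by move=> x x' /AD ? /AD ?; apply: ginj.
  have [BD|nBD] := pselect (forall b, B b -> exists x, D x /\ g x = b).
    right; exists (fun b => match pselect (exists x, D x /\ g x = b) with
               left h => sval (cid h) | right _ => x0 end); split.
      move=> b Bb; case: pselect => [h|[]]; last exact: BD.
      by case: (cid h) => x [Dx _] /=; apply: DA.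
    move=> b b' Bb Bb'; case: pselect => [h|[]]; last exact: BD.
    case: pselect => [h'|[]]; last exact: BD.
    case: (cid h) => x [Dx gx]; case: (cid h') => x' [Dx' gx'] /= e; by rewrite -gx -gx' e.
  have [a [Aa Da]] : exists a, A a /\ ~ D a.
    apply: contra_notP nAD => H x Ax; apply: contra_notP H => nD; by exists x.
  have [b [Bb nb]] : exists b, B b /\ ~ exists x, D x /\ g x = b.
    apply: contra_notP nBD => H x Bx; apply: contra_notP H => nD; by exists x.
  pose D' := fun x => D x \/ x = a.
  pose g' := fun x => if pselect (x = a) then b else g x.
  have g'a : g' a = b by rewrite /g'; case: pselect.
  have g'E x : x <> a -> g' x = g x by rewrite /g'; case: pselect.
  have : good D' g'.
    split; [|split].
    - by move=> x [/DA|->].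
    - move=> x [Dx|->]; last by rewrite g'a.
      by rewrite g'E; [apply: gB | move=> e; apply: Da; rewrite -e].
    - have nDa x : D x -> x <> a by move=> Dx e; apply: Da; rewrite -e.
      move=> x x' [Dx|->] [Dx'|->] //.
      + by rewrite (g'E x (nDa _ Dx)) (g'E x' (nDa _ Dx')); apply: ginj.
      + by rewrite (g'E x (nDa _ Dx)) g'a => e; exfalso; apply: nb; exists x.
      + by rewrite (g'E x' (nDa _ Dx')) g'a => e; exfalso; apply: nb; exists x'.
  move=> gD'; exfalso; apply: (Da); apply: (gmax D' g' gD'); last by right.
  split => /=; first by move=> x Dx; left.
  by move=> x Dx; rewrite g'E // => e; apply: Da; rewrite -e.
Qed.

Lemma hessen T (e : nat -> T) : injective e -> exists p : T * T -> T, injective p.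
Proof.
move=> einj.
pose good (D : set (T * T)) (f : T * T -> T) :=
  [/\ (forall z, D z <-> D (z.1, z.1) /\ D (z.2, z.2)), (forall i, D (e i, e i)),
      (forall z, D z -> D (f z, f z)) &
      (forall z z', D z -> D z' -> f z = f z' -> z = z')].
pose inv x := match pselect (exists i, e i = x) with
                left h => sval (cid h) | right _ => 0%N end.
have invK i : inv (e i) = i.
  rewrite /inv; case: pselect => [h|[]]; last by exists i.
  by case: (cid h) => j /= /einj.
pose D0 z := exists i j, z = (e i, e j).
pose f0 (z : T * T) := e (pickle (inv z.1, inv z.2)).
have [||D [f [[HD De Df finj] fmax]]] := @zorn_pf (T * T) T (e 0) good D0 f0.
- split.
  + move=> [x y]; split => [[i [j [-> ->]]]|[[i [j [-> _]]] [k [l [-> _]]]]] /=.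
      by split; [exists i, i | exists j, j].
    by exists i, k.
  + by move=> i; exists i, i.
  + by move=> z _; exists (pickle (inv z.1, inv z.2)), (pickle (inv z.1, inv z.2)).
  + move=> [x y] [x' y'] [i [j [-> ->]]] [i' [j' [-> ->]]] /einj.
    by rewrite /= !invK => /(pcan_inj pickleK) [-> ->].
- move=> C [c0 Cc0] Cg Ccomp D f HD Hf.
  have common z z' c1 c2 : C c1 -> C c2 -> c1.1 z -> c2.1 z' ->
      exists2 c, C c & c.1 z /\ c.1 z'.
    move=> C1 C2 z1 z2; case: (Ccomp _ _ C1 C2) => [[s _]|[s _]].
      by exists c2 => //; split => //; apply: s.
    by exists c1 => //; split => //; apply: s.
  split.
  + move=> z; split.
      move=> /HD [c Cc cz]; have [H _ _ _] := Cg _ Cc.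
      by have [h1 h2] := (H z).1 cz; split; apply/HD; exists c.
    move=> [/HD [c1 C1 z1] /HD [c2 C2 z2]].
    have [c Cc [zc1 zc2]] := common _ _ _ _ C1 C2 z1 z2.
    have [H _ _ _] := Cg _ Cc; apply/HD; exists c => //; exact/H.
  + by move=> i; apply/HD; exists c0 => //; have [_ H _ _] := Cg _ Cc0; apply: H.
  + move=> z /HD [c Cc cz]; rewrite (Hf c z Cc cz); apply/HD; exists c => //.
    by have [_ _ H _] := Cg _ Cc; apply: H.
  + move=> z z' /HD [c1 C1 z1] /HD [c2 C2 z2].
    have [c Cc [zc1 zc2]] := common _ _ _ _ C1 C2 z1 z2.
    rewrite (Hf c z Cc zc1) (Hf c z' Cc zc2).
    by have [_ _ _ H] := Cg _ Cc; apply: H.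
- pose B x := D (x, x).
  have HD' z : D z <-> B z.1 /\ B z.2 by apply: HD.
  have fB x y : B x -> B y -> B (f (x, y)).
    by move=> Bx By; apply: (Df (x, y)); apply/HD'.
  have finj' x y x' y' : B x -> B y -> B x' -> B y' -> f (x, y) = f (x', y') -> x = x' /\ y = y'.
    move=> Bx By Bx' By' /finj; rewrite -!/(D _) => H.
    by case: (H (proj2 (HD' (x, y)) (conj Bx By)) (proj2 (HD' (x', y')) (conj Bx' By'))) => -> ->.
  have e01 : e 0 <> e 1 by move=> /einj.
  have Be0 : B (e 0) := De 0.
  have Be1 : B (e 1) := De 1.
  case: (compar (e 0) (e 0) (fun x => ~ B x) B) => [[h [hB hinj]]|[h [hB hinj]]].
  + pose phi x := if pselect (B x) then f (e 0, x) else f (e 1, h x).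
    have phiB x : B (phi x).
      rewrite /phi; case: pselect => Bx; first exact: fB.
      by apply: fB => //; apply: hB.
    have phiinj : injective phi.
      move=> x x'; rewrite /phi; case: pselect => Bx; case: pselect => Bx' H.
      * by case: (finj' _ _ _ _ Be0 Bx Be0 Bx' H).
      * by case: (finj' _ _ _ _ Be0 Bx Be1 (hB _ Bx') H) => /e01.
      * by case: (finj' _ _ _ _ Be1 (hB _ Bx) Be0 Bx' H) => /esym /e01.
      * by case: (finj' _ _ _ _ Be1 (hB _ Bx) Be1 (hB _ Bx') H) => _ /hinj; apply.
    exists (fun z => f (phi z.1, phi z.2)) => [[x y] [x' y']] /= H.
    by case: (finj' _ _ _ _ (phiB x) (phiB y) (phiB x') (phiB y') H) => /phiinj -> /phiinj ->.
  + exfalso.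
    pose HB w := exists b, B b /\ h b = w.
    pose hinv w := match pselect (HB w) with left hh => sval (cid hh) | right _ => e 0 end.
    have hinvP w : HB w -> B (hinv w) /\ h (hinv w) = w.
      by rewrite /hinv; case: pselect => // hh _; case: (cid hh).
    pose B' w := B w \/ HB w.
    pose sig w := if pselect (B w) then f (e 0, w) else f (e 1, hinv w).
    have sigB w : B' w -> B (sig w).
      rewrite /sig; case: pselect => Bw; first by move=> _; apply: fB.
      by case=> // /hinvP [? _]; apply: fB.
    have siginj w w' : B' w -> B' w' -> sig w = sig w' -> w = w'.
      move=> bw bw'; rewrite /sig; case: pselect => Bw; case: pselect => Bw' H.
      * by case: (finj' _ _ _ _ Be0 Bw Be0 Bw' H).
      * case: bw' => // /hinvP [h1 _].
        by case: (finj' _ _ _ _ Be0 Bw Be1 h1 H) => /e01.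
      * case: bw => // /hinvP [h1 _].
        by case: (finj' _ _ _ _ Be1 h1 Be0 Bw' H) => /esym /e01.
      * case: bw => // /hinvP [h1 h2]; case: bw' => // /hinvP [h1' h2'].
        by case: (finj' _ _ _ _ Be1 h1 Be1 h1' H) => _ e'; rewrite -h2 -h2' e'.
    pose D' z := B' z.1 /\ B' z.2.
    pose f' z := if pselect (D z) then f z else h (f (sig z.1, sig z.2)).
    have hnB z : B' z.1 -> B' z.2 -> ~ B (h (f (sig z.1, sig z.2))).
      by move=> b1 b2; apply: hB; apply: fB; apply: sigB.
    have f'D z : D z -> f' z = f z by rewrite /f'; case: pselect.
    have f'N z : ~ D z -> f' z = h (f (sig z.1, sig z.2)) by rewrite /f'; case: pselect.
    have gD' : good D' f'.
      split.
      - by move=> z; split => [[]|[[? _] [? _]]].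
      - by move=> i; split; left; apply: De.
      - move=> z [b1 b2]; have [Dz|Dz] := pselect (D z).
          by rewrite f'D //; split; left; apply: Df.
        by rewrite f'N //; split; right; exists (f (sig z.1, sig z.2)); split => //; apply: fB; apply: sigB.
      - move=> z z' [b1 b2] [b1' b2'].
        have [Dz|Dz] := pselect (D z); have [Dz'|Dz'] := pselect (D z').
        * by rewrite (f'D _ Dz) (f'D _ Dz'); apply: finj.
        * rewrite (f'D _ Dz) (f'N _ Dz') => e'; exfalso; apply: (hnB z' b1' b2'); rewrite -e'.
          exact: (Df _ Dz).
        * rewrite (f'N _ Dz) (f'D _ Dz') => e'; exfalso; apply: (hnB z b1 b2); rewrite e'.
          exact: (Df _ Dz').
        * rewrite (f'N _ Dz) (f'N _ Dz') => /hinj H.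
          have := H (fB _ _ (sigB _ b1) (sigB _ b2)) (fB _ _ (sigB _ b1') (sigB _ b2')).
          move=> /(finj' _ _ _ _ (sigB _ b1) (sigB _ b2) (sigB _ b1') (sigB _ b2')) [].
          move=> /(siginj _ _ b1 b1') e1 /(siginj _ _ b2 b2') e2.
          by case: z z' {b1 b2 b1' b2' Dz Dz' H} e1 e2 => [? ?] [? ?] /= -> ->.
    have := fmax D' f' gD'.
    have ext : pext (D, f) (D', f').
      split => /=; first by move=> z /HD' [? ?]; split; left.
      by move=> z Dz; rewrite f'D.
    move=> /(_ ext (h (e 0), h (e 0))) H.
    apply: (hB (e 0) (De 0)); apply: H; split; right; exists (e 0); split => //; apply: De.
Qed.

Fixpoint encs T (p : T * T -> T) (q : option T -> T) (s : seq T) : T :=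
  if s is a :: s' then q (Some (p (a, encs p q s'))) else q None.

Lemma seq_enc T (e : nat -> T) : injective e -> exists enc : seq T -> T, injective enc.
Proof.
move=> einj; have [p pinj] := hessen einj.
pose q (o : option T) := if o is Some x then p (e 1, x) else p (e 0, e 0).
have qinj : injective q.
  move=> [x|] [y|] //= /pinj.
  - by case=> ->.
  - by case=> /einj.
  - by case=> /einj.
exists (encs p q); elim=> [|a s IH] [|b t] H.
- by [].
- by have := @qinj None (Some _) H.
- by have := @qinj (Some _) None H.
- by case: (@qinj (Some _) (Some _) H) => /pinj [-> /IH ->].
Qed.

Fixpoint allin T (A : set T) (s : seq T) : Prop :=
  if s is x :: s' then A x /\ allin A s' else True.

Lemma count_inf (R : realType) T (A : set T) (e : nat -> T) :
  injective e -> (forall i, A (e i)) -> lt_continuum R A ->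
  ~ exists F : R -> nat * seq T, injective F /\ forall r, allin A (F r).2.
Proof.
move=> einj eA sA [F [Finj FA]].
pose TA := {x : T | A x}.
pose e' i : TA := exist _ (e i) (eA i).
have e'inj : injective e' by move=> i j /(congr1 sval) /einj.
have [enc encinj] := seq_enc e'inj.
pose toTA x : TA := match pselect (A x) with left h => exist _ x h | right _ => e' 0%N end.
have toTAK x : A x -> sval (toTA x) = x by rewrite /toTA; case: pselect.
have mapinj s1 s2 : allin A s1 -> allin A s2 -> map toTA s1 = map toTA s2 -> s1 = s2.
  elim: s1 s2 => [|a s1 IH] [|b s2] //= [Aa As1] [Ab As2] [hab hs].
  by rewrite -(toTAK a) // -(toTAK b) // hab (IH s2).
apply: sA; exists (fun r => sval (enc (e' (F r).1 :: map toTA (F r).2))); split; last first.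
  by move=> r; exact: (svalP (enc _)).
have svinj (u v : TA) : sval u = sval v -> u = v.
  by move: u v => [x hx] [y hy] /= exy; subst y; congr exist; exact: Prop_irrelevance.
move=> r r' /svinj /encinj [h1 h2].
have := einj _ _ h1; have := mapinj _ _ (FA r) (FA r') h2.
move=> e2 e1; apply: Finj; move: e1 e2; by case: (F r) (F r') => [? ?] [? ?] /= -> ->.
Qed.

Module Unc.
Import constructive_ereal.
Lemma R_uncount (R : realType) : ~ exists g : R -> nat, injective g.
Proof.
move=> [g ginj].
have : cardinality.countable (`[0%R, 1%R]%classic : set R).
  by apply/cardinality.countable_injP; exists g => x y _ _; apply: ginj.
move/lebesgue_measure.countable_lebesgue_measure0.
rewrite lebesgue_measure.lebesgue_measure_itv /= lte_fin ltr01 /=.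
by rewrite oppr0 adde0 => /eqP; rewrite eqe oner_eq0.
Qed.
End Unc.
Import Unc.


Lemma small_sub (R : realType) T (A B : set T) :
  (forall x, A x -> B x) -> lt_continuum R B -> lt_continuum R A.
Proof. by move=> AB sB [f [finj fA]]; apply: sB; exists f; split => // r; apply: AB. Qed.

Lemma RR_inj (R : realType) : exists h : R * R -> R, injective h.
Proof.
apply: (@hessen R (fun n : nat => (n%:R)%R)) => m n /eqP; rewrite eqr_nat => /eqP.
by [].
Qed.

Lemma small_union (R : realType) T (A B : set T) :
  lt_continuum R A -> lt_continuum R B -> lt_continuum R (fun x => A x \/ B x).
Proof.
move=> sA sB [f [finj fAB]].
have [h hinj] := RR_inj R.
have [[x Hx]|Hn] := pselect (exists x : R, forall y, A (f (h (x, y)))).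
  by apply: sA; exists (fun y => f (h (x, y))); split => // y y' /finj /hinj [].
have H x : exists y, B (f (h (x, y))).
  apply: contra_notP Hn => nB; exists x => y.
  by case: (fAB (h (x, y))) => // b; exfalso; apply: nB; exists y.
apply: sB; exists (fun x => f (h (x, sval (cid (H x))))); split.
  by move=> x x' /finj /hinj [].
by move=> x; exact: (svalP (cid (H x))).
Qed.

Lemma allin_map T U (A : set T) (B : set U) (f : T -> U) s :
  (forall x, A x -> B (f x)) -> allin A s -> allin B (map f s).
Proof. by move=> AB; elim: s => //= a s IH [Aa As]; split; [apply: AB | apply: IH]. Qed.

Lemma count_small (R : realType) T (A : set T) : lt_continuum R A ->
  ~ exists F : R -> nat * seq T, injective F /\ forall r, allin A (F r).2.
Proof.
move=> sA [F [Finj FA]].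
pose A' : set (T + nat) := fun x => match x with inl a => A a | inr _ => True end.
pose A1 : set (T + nat) := fun x => match x with inl a => A a | inr _ => False end.
pose A2 : set (T + nat) := fun x => match x with inl a => False | inr _ => True end.
have sA1 : lt_continuum R A1.
  move=> [f [finj fA]].
  have a0 : T by case: (f 0%R) (fA 0%R) => [a _|n []]; exact: a.
  apply: sA; exists (fun r => match f r with inl a => a | inr _ => a0 end); split.
    move=> r r'; case E: (f r) (fA r) => [a|n] //= _; case E': (f r') (fA r') => [a'|n'] //= _.
    by move=> eaa; apply: finj; rewrite E E' eaa.
  by move=> r; case E: (f r) (fA r) => [a|n] //=.
have sA2 : lt_continuum R A2.
  move=> [f [finj fA]]; apply: (@R_uncount R).
  exists (fun r => match f r with inr n => n | inl _ => 0%N end).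
  move=> r r'; case E: (f r) (fA r) => [a|n] //= _; case E': (f r') (fA r') => [a'|n'] //= _.
  by move=> enn; apply: finj; rewrite E E' enn.
have sA' : lt_continuum R A'.
  apply: small_sub (small_union sA1 sA2).
  by move=> [a|n] /=; [left|right].
apply: (@count_inf R (T + nat) A' (fun n => inr n)) => //.
  by move=> m n [].
exists (fun r => ((F r).1, map inl (F r).2)); split.
  move=> r r' [h1 /(inj_map (@inl_inj T nat)) h2]; apply: Finj.
  by move: h1 h2; case: (F r) (F r') => [? ?] [? ?] /= -> ->.
by move=> r; apply: allin_map (FA r).
Qed.

Local Open Scope ring_scope.

Section P.
Variable R : realType.

Definition mlift n' (k : 'I_n'.+1) (m : 'X_{1..n'.+1}) : 'X_{1..n'} :=
  [multinom m (lift k i) | i < n'].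

Definition Qj n' (Q : {mpoly R[n'.+1]}) (k : 'I_n'.+1) (j : nat) : {mpoly R[n']} :=
  \sum_(m <- msupp Q | m k == j) Q@_m *: 'X_[mlift k m].

Definition polyOf n' (Q : {mpoly R[n'.+1]}) k (v' : 'I_n' -> R) : {poly R} :=
  \poly_(j < msize Q) (Qj Q k j).@[v'].

Lemma mlift_inj n' k (m m' : 'X_{1..n'.+1}) : m k = m' k -> mlift k m = mlift k m' -> m = m'.
Proof.
move=> hk /mnmP hl; apply/mnmP => i; case: (unliftP k i) => [j ->|->] //.
by have := hl j; rewrite !mnmE.
Qed.

Lemma Qj_coef n' Q k j (mu : 'X_{1..n'}) :
  (@Qj n' Q k j)@_mu = \sum_(m <- msupp Q | (m k == j) && (mlift k m == mu)) Q@_m.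
Proof.
rewrite /Qj (big_morph (mcoeff mu) (@mcoeffD _ _ mu) (mcoeff0 _ mu)) big_mkcondr.
by apply: eq_bigr => m _; rewrite mcoeffZ mcoeffX; case: eqP; rewrite ?mulr1 ?mulr0.
Qed.

Lemma big_sel1 (I : eqType) (r : seq I) (P : pred I) (F : I -> R) a :
  uniq r -> (forall a b, a \in r -> b \in r -> P a -> P b -> a = b) ->
  a \in r -> P a -> \sum_(i <- r | P i) F i = F a.
Proof.
move=> ur H ar Pa.
rewrite (big_rem a) //= Pa big1_seq ?addr0 // => b /andP [Pb].
rewrite mem_rem_uniq // => /andP [/= nba br].
by move: nba; rewrite (H a b) ?eqxx.
Qed.

Lemma big_atmost1 (I : eqType) (r : seq I) (P : pred I) (F : I -> R) :
  uniq r -> (forall a b, a \in r -> b \in r -> P a -> P b -> a = b) ->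
  (\sum_(i <- r | P i) F i = 0) \/ exists2 a, (a \in r) && P a & \sum_(i <- r | P i) F i = F a.
Proof.
move=> ur H.
have [[a /andP[ar Pa]]|none] := boolp.pselect (exists a, (a \in r) && P a).
  by right; exists a; [rewrite ar Pa | apply: big_sel1].
left; rewrite big1_seq // => b /andP [Pb br]; exfalso; apply: none; exists b.
by rewrite br Pb.
Qed.

Lemma Qj_atmost1 n' (Q : {mpoly R[n'.+1]}) k j (mu : 'X_{1..n'}) (a b : 'X_{1..n'.+1}) :
  a \in msupp Q -> b \in msupp Q ->
  (a k == j) && (mlift k a == mu) -> (b k == j) && (mlift k b == mu) -> a = b.
Proof.
move=> _ _ /andP [/eqP ak /eqP al] /andP [/eqP bk /eqP bl].
by apply: (@mlift_inj _ k); [rewrite ak bk | rewrite al bl].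
Qed.

Lemma Qj_nz n' (Q : {mpoly R[n'.+1]}) k m0 : m0 \in msupp Q -> Qj Q k (m0 k) != 0.
Proof.
move=> m0Q; apply/eqP => h; have := congr1 (mcoeff (mlift k m0)) h.
rewrite mcoeff0 Qj_coef (big_sel1 _ (msupp_uniq Q) (@Qj_atmost1 _ Q k (m0 k) (mlift k m0)) m0Q).
  by apply/eqP; rewrite -mcoeff_msupp.
by rewrite !eqxx.
Qed.

Definition cK (K : R -> Prop) n (Q : {mpoly R[n]}) := forall m, Q@_m != 0 -> K Q@_m.

Lemma Qj_cK K n' (Q : {mpoly R[n'.+1]}) k j : cK K Q -> cK K (Qj Q k j).
Proof.
move=> HQ mu; rewrite Qj_coef.
case: (big_atmost1 (fun m => Q@_m) (msupp_uniq Q) (@Qj_atmost1 _ Q k j mu)) => [->|[a /andP [aQ _] ->]].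
  by rewrite eqxx.
by move=> _; apply: HQ; rewrite -mcoeff_msupp.
Qed.

Lemma mk_lt n (Q : {mpoly R[n]}) (m : 'X_{1..n}) k : m \in msupp Q -> (m k < msize Q)%N.
Proof.
move=> mQ; apply: leq_ltn_trans (msize_mdeg_lt mQ).
by rewrite mdegE (bigD1 k) //= leq_addr.
Qed.

Lemma Qj_eval n' (Q : {mpoly R[n'.+1]}) k j (v' : 'I_n' -> R) :
  (Qj Q k j).@[v'] = \sum_(m <- msupp Q | m k == j) Q@_m * \prod_(i < n') v' i ^+ m (lift k i).
Proof.
rewrite /Qj (big_morph _ (mevalD v') (meval0 v')); apply: eq_bigr => m _.
by rewrite mevalZ mevalX; congr (_ * _); apply: eq_bigr => i _; rewrite mnmE.
Qed.

Lemma eval_polyOf n' (Q : {mpoly R[n'.+1]}) k (v : 'I_n'.+1 -> R) :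
  Q.@[v] = (polyOf Q k (fun i => v (lift k i))).[v k].
Proof.
rewrite horner_poly mevalE.
symmetry; under eq_bigr do rewrite Qj_eval big_distrl /= big_mkcond /=.
rewrite exchange_big /= big_seq [RHS]big_seq; apply: eq_bigr => m mQ.
rewrite (bigD1_ord k) //= -big_mkcond /=.
rewrite (big_pred1 (Ordinal (mk_lt k mQ))); last by move=> j /=; rewrite eq_sym.
by rewrite /= -mulrA; congr (_ * _); rewrite mulrC.
Qed.

End P.

Section M.
Variable R : realType.

Definition indep (K S : set R) := forall n (Q : {mpoly R[n]}) (v : 'I_n -> R),
  Q != 0 -> cK K Q -> injective v -> (forall i, S (v i)) -> Q.@[v] != 0.

Lemma eval_n0 (Q : {mpoly R[0]}) v : Q != 0 -> Q.@[v] != 0.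
Proof.
move=> Qnz; have e := nvar0_mpolyC Q; rewrite e mevalC.
by apply: contraNneq Qnz => h; rewrite e h mpolyC0.
Qed.

Lemma common (F : set (set R)) : total_on F subset -> forall l : seq R,
  (forall x, x \in l -> exists2 S, F S & S x) -> l != [::] ->
  exists S, F S /\ forall x, x \in l -> S x.
Proof.
move=> Ftot; elim=> [//|a l IH] Hl _.
have [Sa FSa Saa] := Hl a (mem_head _ _).
case: (eqVneq l [::]) => [->|lnz].
  by exists Sa; split => // x; rewrite inE => /eqP ->.
have [S [FS HS]] := IH (fun x xl => Hl x (@mem_behead _ (a :: l) x xl)) lnz.
case: (Ftot _ _ FSa FS) => [sub|sub].
  by exists S; split => // x; rewrite inE => /orP [/eqP ->|/HS]; [apply: sub|].
by exists Sa; split => // x; rewrite inE => /orP [/eqP ->|/HS /sub].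
Qed.

Lemma indep_chain K (F : set (set R)) : (forall S, F S -> indep K S) ->
  total_on F subset -> indep K (\bigcup_(X in F) X).
Proof.
move=> FI Ftot [|n'] Q v Qnz cKQ vinj vS; first exact: eval_n0.
have H1 : forall x, x \in [seq v i | i <- enum 'I_n'.+1] -> exists2 S, F S & S x.
  by move=> x /mapP [i _ ->]; apply: vS.
have H2 : [seq v i | i <- enum 'I_n'.+1] != [::].
  by apply/eqP => /(congr1 size); rewrite size_map size_enum_ord.
have [S [FS HS]] := @common F Ftot _ H1 H2.
by apply: (FI S FS) => // i; apply: HS; apply: map_f; rewrite mem_enum.
Qed.

Definition Dt := {n' : nat & (seq 'X_{1..n'.+1} * 'I_n'.+1)%type}.

Definition G (d : Dt) (s : seq R) : {poly R} :=
  let: existT n' (ms, k) := d in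
  polyOf (\sum_(i < size ms) s`_i *: 'X_[nth 0%MM ms i]) k (fun i => s`_(size ms + i)).

Definition Bad (A : set R) (t : R) := exists ds : Dt * seq R,
  allin A ds.2 /\ G ds.1 ds.2 != 0 /\ root (G ds.1 ds.2) t.

Lemma Bad_small A : lt_continuum R A -> lt_continuum R (Bad A).
Proof.
move=> sA [f [finj fB]]; apply: (count_small sA).
pose ds r := sval (cid (fB r)).
have dsP r : allin A (ds r).2 /\ G (ds r).1 (ds r).2 != 0 /\ root (G (ds r).1 (ds r).2) (f r).
  exact: (svalP (cid (fB r))).
pose p r := G (ds r).1 (ds r).2.
have froot r : f r \in polyrcf.rootsR (p r).
  have [_ [pnz rt]] := dsP r.
  by rewrite -(polyrcf.roots_on_rootsR pnz) rt andbT.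
exists (fun r => (pickle ((ds r).1, index (f r) (polyrcf.rootsR (p r))), (ds r).2)); split.
  move=> r r' [/(pcan_inj pickleK) [e1 e2] e3].
  have ep : p r = p r' by rewrite /p e1 e3.
  apply: finj; rewrite -(nth_index 0 (froot r)) -(nth_index 0 (froot r')) -ep e2.
  by rewrite ep.
by move=> r; have [] := dsP r.
Qed.

Lemma allin_cat T (A : set T) s1 s2 : allin A s1 -> allin A s2 -> allin A (s1 ++ s2).
Proof. by elim: s1 => //= a s1 IH [Aa As1] As2; split => //; apply: IH. Qed.

Lemma allin_mapin (U : eqType) (A : set R) (f : U -> R) s :
  (forall x, x \in s -> A (f x)) -> allin A (map f s).
Proof.
elim: s => //= a s IH H; split; first by apply: H; rewrite mem_head.
by apply: IH => x xs; apply: H; rewrite inE xs orbT.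
Qed.

Lemma indep_ext K S t : indep K S -> ~ S t -> ~ Bad (fun x => S x \/ K x) t ->
  indep K (fun x => S x \/ x = t).
Proof.
move=> IS nSt nBt n Q v Qnz cKQ vinj vS.
have [Hall|Hex] := pselect (forall i, v i <> t).
  by apply: IS => // i; case: (vS i) => // /Hall.
have [k vk] : exists k, v k = t by apply: contra_notP Hex => H i e; apply: H; exists i.
move: Q v k vinj vS Qnz cKQ vk {Hex}; case: n => [|n'] Q v k; first by case: k.
move=> vinj vS Qnz cKQ vk.
pose v' i := v (lift k i).
have v'inj : injective v' by move=> i j /vinj /lift_inj.
have v'S i : S (v' i).
  case: (vS (lift k i)) => // e; exfalso; move/eqP: (neq_lift k i); apply.
  by apply: vinj; rewrite vk e.
rewrite (eval_polyOf Q k v) vk -/v'.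
set p := polyOf Q k v'.
have [m0 m0Q] : exists m0, m0 \in msupp Q.
  case E: (msupp Q) => [|m0 ?]; last by exists m0; rewrite mem_head.
  by move/eqP: E; rewrite msupp_eq0 (negbTE Qnz).
have pnz : p != 0.
  apply/eqP => h; have := congr1 (fun q : {poly R} => q`_(m0 k)) h.
  rewrite /= coef_poly (mk_lt k m0Q) coef0 => /eqP.
  by move=> /eqP; apply/eqP; exact: (IS _ _ _ (Qj_nz k m0Q) (Qj_cK (k:=k) (j:=m0 k) cKQ) v'inj v'S).
apply/negP => /eqP pt0; apply: nBt.
pose s := [seq Q@_m | m <- msupp Q] ++ [seq v' i | i <- enum 'I_n'].
have Gp : G (existT _ n' (msupp Q, k)) s = p.
  rewrite /G /p; congr polyOf.
    rewrite [RHS]mpolyE (big_nth 0%MM) big_mkord; apply: eq_bigr => i _.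
    have hi : (i < size [seq Q@_m | m <- msupp Q])%N by rewrite size_map.
    by rewrite /s nth_cat hi (nth_map 0%MM).
  apply: funext => i; rewrite /s nth_cat !size_map ltnNge leq_addr /= addKn.
  by rewrite (nth_map i) ?size_enum_ord // nth_ord_enum.
exists (existT _ n' (msupp Q, k), s).
change (allin (fun x => S x \/ K x) s /\ G (existT _ n' (msupp Q, k)) s != 0 /\
  root (G (existT _ n' (msupp Q, k)) s) t).
rewrite Gp.
split; last by split => //; rewrite /root pt0.
apply: allin_cat; apply: allin_mapin => x xs.
  by right; apply: cKQ; rewrite -mcoeff_msupp.
by left; apply: v'S.
Qed.

End M.

Unset Implicit Arguments.

Theorem lemma2p5 (R : realType) (Fam : anypoly R -> Prop) (X : R -> Prop)
  (HFam : forall P : anypoly R, Fam P ->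
            projT2 P != 0 /\ (projT2 P)@_0%MM = 0)
  (HFc : lt_continuum R Fam) (HXc : lt_continuum R X) :
  exists y : R -> R, injective y /\
    forall (n : nat) (p : {mpoly R[n]}) (xi : 'I_n -> R),
      (0 < n)%N -> Fam (existT _ n p) -> injective xi ->
      ~ X p.@[fun i => y (xi i)].
Proof.
pose K1 : set R := fun c => exists P, Fam P /\ exists m, c = (projT2 P)@_m.
pose K2 : set R := fun c => exists x, X x /\ c = - x.
pose K : set R := fun c => K1 c \/ K2 c.
have sK1 : lt_continuum R K1.
  move=> [f [finj fK]]; apply: (count_small HFc).
  pose Pr r := sval (cid (fK r)).
  have PrP r : Fam (Pr r) /\ exists m, f r = (projT2 (Pr r))@_m := svalP (cid (fK r)).
  pose mr r := sval (cid (proj2 (PrP r))).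
  have mrP r : f r = (projT2 (Pr r))@_(mr r) := svalP (cid (proj2 (PrP r))).
  pose V (P : anypoly R) (i : nat) := (projT2 P)@_(nth 0%MM (msupp (projT2 P)) i).
  have fV r : f r != 0 -> f r = V (Pr r) (index (mr r) (msupp (projT2 (Pr r)))).
    move=> fnz; have mQ : mr r \in msupp (projT2 (Pr r)) by rewrite mcoeff_msupp -mrP.
    by rewrite /V (nth_index _ mQ) -mrP.
  exists (fun r => if f r == 0 then (0%N, [::]) else
            ((index (mr r) (msupp (projT2 (Pr r)))).+1, [:: Pr r])); split.
    move=> r r'; case: eqP => [f0|/eqP fnz]; case: eqP => [f0'|/eqP fnz'] //.
      by move=> _; apply: finj; rewrite f0 f0'.
    case=> ei eP; apply: finj; rewrite (fV r fnz) (fV r' fnz') ei eP.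
    by [].
  by move=> r; case: eqP => //= _; split => //; exact: (PrP r).1.
have sK2 : lt_continuum R K2.
  move=> [f [finj fK]]; apply: HXc; exists (fun r => - f r); split.
    by move=> r r' /oppr_inj /finj.
  by move=> r; case: (fK r) => x [Xx ->]; rewrite opprK.
have sK : lt_continuum R K := small_union sK1 sK2.
have [S [IS Smax]] := Zorn_bigcup (@indep_chain R K).
have nsS : ~ lt_continuum R S.
  move=> sS.
  have sA := small_union sS sK.
  have sB := Bad_small sA.
  have [t [nSt nBt]] : exists t, ~ S t /\ ~ Bad (fun x => S x \/ K x) t.
    apply: contra_notP (small_union sS sB) => H; exists id; split => // r.
    apply: contra_notP H => h; exists r; split => ?; apply: h; [left|right] => //.
  apply: (Smax (fun x => S x \/ x = t)); last exact: indep_ext.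
  split; first by move=> x Sx; left.
  by move=> /(_ t (or_intror erefl)).
have [y [yinj yS]] : exists y : R -> R, injective y /\ forall r, S (y r).
  by apply: contra_notP nsS => H [f [finj fS]]; apply: H; exists f.
exists y; split => // n p xi npos Fp xiinj Xp.
set x := p.@[_] in Xp.
have [/= pnz p0] := HFam _ Fp.
pose Q := p - x%:MP.
have Qnz : Q != 0.
  apply/eqP => /eqP; rewrite subr_eq0 => /eqP ep.
  move: p0; rewrite ep mcoeffC eqxx mulr1 => x0.
  by move: pnz; rewrite ep x0 mpolyC0 eqxx.
have cKQ : cK K Q.
  move=> m; rewrite mcoeffB mcoeffC; case: (eqVneq m 0%MM) => [->|mn0].
    by rewrite mulr1 p0 sub0r => _; right; exists x.
  by rewrite mulr0 subr0 => _; left; exists (existT _ n p); split => //; exists m.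
have := IS n Q (fun i => y (xi i)) Qnz cKQ.
have vinj : injective (fun i => y (xi i)) by move=> i j /yinj /xiinj.
move=> /(_ vinj (fun i => yS (xi i))).
by rewrite mevalB mevalC subrr eqxx.
Qed.
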